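(* Let $r\ge 2$ and $n\ge 1$, let $V$ be a set of $rn$ vertices, and let $\mathcal{E}$ be the set of all $r$-element subsets of $V$. Choose elements of $\mathcal{E}$ one at a time in a uniformly random order (without repetition), stopping as soon as every vertex of $V$ lies in at least one chosen element; let $G_\omega$ be the resulting $r$-uniform hypergraph on $V$. Then the expected number of matchings in $G_\omega$ is $$\frac{(rn)!}{(r!)^n\, n!}\sum_{i=1}^r (-1)^{i-1}\frac{\binom{r}{i}}{\binom{\binom{nr}{r}-\binom{nr-i}{r}+n-1}{n}}.$$
   Context: A matching in an $r$-uniform hypergraph on vertex set $V$ is a set $M$ of its edges such that every vertex of $V$ lies in exactly one edge of $M$. *)

(* Defs.v *)
From mathcomp Require Import all_boot all_order all_algebra all_fingroup.
Set Implicit Arguments. Unset Strict Implicit. Unset Printing Implicit Defensive.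
Import GRing.Theory Num.Theory.

Definition all_edges (r n : nat) : {set {set 'I_(r * n)}} :=
  [set A : {set 'I_(r * n)} | #|A| == r].

Definition nedges (r n : nat) : nat := #|all_edges r n|.

(* A uniformly random order of E is a uniformly random permutation
   sigma of 'I_N; the k-th chosen edge is enum_val (sigma k). *)
Definition kth_edge (r n : nat) (sigma : {perm 'I_(nedges r n)})
  (k : 'I_(nedges r n)) : {set 'I_(r * n)} :=
  @enum_val _ (mem (all_edges r n)) (sigma k).

Definition prefix_edges (r n : nat) (sigma : {perm 'I_(nedges r n)}) (t : nat)
  : {set {set 'I_(r * n)}} :=
  [set kth_edge sigma k | k : 'I_(nedges r n) & (k < t)%N].

Definition covers (r n : nat) (H : {set {set 'I_(r * n)}}) : bool :=
  [forall v : 'I_(r * n), [exists e in H, v \in e]].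

Definition stop_time (r n : nat) (sigma : {perm 'I_(nedges r n)}) : nat :=
  find (fun t => covers (prefix_edges sigma t)) (iota 0 (nedges r n).+1).

Definition G_omega (r n : nat) (sigma : {perm 'I_(nedges r n)})
  : {set {set 'I_(r * n)}} :=
  prefix_edges sigma (stop_time sigma).

Definition is_matching (r n : nat) (M : {set {set 'I_(r * n)}}) : bool :=
  [forall v : 'I_(r * n), #|[set e in M | v \in e]| == 1%N].

Definition num_matchings (r n : nat) (H : {set {set 'I_(r * n)}}) : nat :=
  #|[set M : {set {set 'I_(r * n)}} | (M \subset H) && is_matching M]|.

Definition expected_matchings (r n : nat) : rat :=
  ((\sum_(sigma : {perm 'I_(nedges r n)}) (num_matchings (G_omega sigma))%:R)
     / (nedges r n)`!%:R)%R.

(* Main.v *)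
Require Import Defs.
From mathcomp Require Import all_boot all_order all_algebra all_fingroup.
From mathcomp Require Import zify ring.
Set Implicit Arguments. Unset Strict Implicit. Unset Printing Implicit Defensive.
Import GRing.Theory Num.Theory.


Definition Minset N (Y : {set 'I_N}) (y : 'I_N) :=
  [set q : {perm 'I_N} | [forall x in Y, (x != y) ==> (q y < q x)]].

Lemma Minset_le N (Y : {set 'I_N}) y z : y \in Y -> z \in Y ->
  #|Minset Y z| <= #|Minset Y y|.
Proof.
move=> yY zY.
rewrite -(card_imset _ (mulgI (tperm z y))).
apply: subset_leq_card; apply/subsetP => _ /imsetP[q qM ->].
move: qM; rewrite !inE => /forallP qM; apply/forallP => x; apply/implyP => xY.
apply/implyP => xy; rewrite !permM tpermR.
have [xz|xz] := eqVneq x z.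
  subst x; rewrite tpermL.
  by have := qM y; rewrite yY /= eq_sym xy.
rewrite tpermD 1?eq_sym //.
by have := qM x; rewrite xY xz.
Qed.

Lemma Minset_eq N (Y : {set 'I_N}) y z : y \in Y -> z \in Y ->
  #|Minset Y z| = #|Minset Y y|.
Proof. by move=> yY zY; apply/eqP; rewrite eqn_leq !Minset_le. Qed.

Lemma Minset_sum N (Y : {set 'I_N}) e : e \in Y ->
  \sum_(y in Y) #|Minset Y y| = N`!.
Proof.
move=> eY.
have -> : \sum_(y in Y) #|Minset Y y| = \sum_(y in Y) \sum_(q : {perm 'I_N}) (q \in Minset Y y : nat).
  by apply: eq_bigr => y _; rewrite -sum1_card big_mkcond; apply: eq_bigr => q _; case: (q \in _).
rewrite exchange_big /=.
rewrite -card_Sn -sum1_card.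
apply: eq_bigr => q _.
case: (arg_minnP (fun y => q y) eY) => y0 y0Y y0min.
rewrite (bigD1 y0) //= big1 ?addn0.
  rewrite inE; apply/eqP; rewrite eqb1; apply/forallP => x; apply/implyP => xY; apply/implyP => xy0.
  have := y0min x xY; rewrite leq_eqVlt => /orP[/eqP|//].
  by move/val_inj/perm_inj => E; rewrite E eqxx in xy0.
move=> y /andP[yY yy0]; rewrite inE.
apply/eqP; rewrite eqb0; apply/negP => /forallP/(_ y0)/implyP/(_ y0Y).
by rewrite eq_sym yy0 /= ltnNge y0min.
Qed.

Lemma min_count N (X : {set 'I_N}) (e : 'I_N) : e \notin X ->
  #|[set q : {perm 'I_N} | [forall x in X, q e < q x]]| * (#|X|).+1 = N`!.
Proof.
move=> eX.
have eY : e \in e |: X by rewrite setU11.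
have -> : [set q : {perm 'I_N} | [forall x in X, q e < q x]] = Minset (e |: X) e.
  apply/setP => q; rewrite !inE; apply/forallP/forallP => H x.
    apply/implyP; rewrite in_setU1 => /orP[/eqP->|xX]; first by rewrite eqxx.
    by apply/implyP => _; have := H x; rewrite xX.
  apply/implyP => xX; have := H x; rewrite in_setU1 xX orbT /=.
  by have -> : (x != e) by apply: contraNneq eX => <-.
have -> : (#|X|).+1 = #|e |: X| by rewrite cardsU1 eX.
rewrite -(Minset_sum eY) mulnC -sum_nat_const.
by apply: eq_bigr => y yY; rewrite (Minset_eq yY eY).
Qed.

Definition patt N (A B : {set 'I_N}) (e : 'I_N) :=
  [set q : {perm 'I_N} | [forall a in A, q a < q e] && [forall b in B, q e < q b]].

Lemma patt_split N (A B : {set 'I_N}) e x : x != e ->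
  #|patt A B e| = #|patt (x |: A) B e| + #|patt A (x |: B) e|.
Proof.
move=> xe.
rewrite -(cardsID [set q : {perm 'I_N} | q x < q e] (patt A B e)).
congr (_ + _); apply: eq_card => q; rewrite !inE.
  apply/idP/idP.
    move=> /andP[/andP[HA HB] Hx]; apply/andP; split => //.
    apply/forallP => a; apply/implyP; rewrite in_setU1 => /orP[/eqP->//|aA].
    by move/forallP: HA => /(_ a) /implyP; apply.
  move=> /andP[HA HB].
  have Hx : q x < q e by move/forallP: HA => /(_ x); rewrite setU11.
  rewrite Hx HB !andbT; apply/forallP => a; apply/implyP => aA.
  by move/forallP: HA => /(_ a); rewrite in_setU1 aA orbT.
apply/idP/idP.
  move=> /andP[Hx /andP[HA HB]]; rewrite HA /=.
  apply/forallP => b; apply/implyP; rewrite in_setU1 => /orP[/eqP->|bB].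
    rewrite ltnNge leq_eqVlt negb_or Hx andbT.
    by apply/negP => /eqP/val_inj/perm_inj E; rewrite E eqxx in xe.
  by move/forallP: HB => /(_ b) /implyP; apply.
move=> /andP[HA HB].
have Hx : q e < q x by move/forallP: HB => /(_ x); rewrite setU11.
rewrite HA /= -leqNgt ltnW //=.
apply/forallP => b; apply/implyP => bB.
by move/forallP: HB => /(_ b); rewrite in_setU1 bB orbT.
Qed.

Lemma patt_count N k : forall (A B : {set 'I_N}) e, #|A| = k -> e \notin A -> e \notin B ->
  [disjoint A & B] ->
  #|patt A B e| * (k + #|B|).+1`! = N`! * k`! * #|B|`!.
Proof.
elim: k => [|k IH] A B e cA eA eB dAB.
  move/cards0_eq: cA => ->.
  have -> : patt set0 B e = [set q : {perm 'I_N} | [forall x in B, q e < q x]].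
    apply/setP => q; rewrite !inE; apply/andP/idP => [[]//|H]; split => //.
    by apply/forallP => a; rewrite inE.
  by rewrite add0n factS mulnA (min_count eB) fact0 muln1.
have : 0 < #|A| by rewrite cA.
case/card_gt0P => x xA.
set A' := A :\ x.
have cA' : #|A'| = k by move: cA; rewrite (cardsD1 x A) xA add1n => -[].
have eA' : e \notin A' by rewrite !inE negb_and eA orbT.
have xB : x \notin B by rewrite (disjointFr dAB xA).
have xA' : x \notin A' by rewrite !inE eqxx.
have dAB' : [disjoint A' & B].
  by apply: disjointWl dAB; apply: subsetDl.
have dAB'' : [disjoint A' & x |: B].
  apply/pred0P => y /=; rewrite !inE; have [->|yx] := eqVneq y x; first by [].
  by case yA: (y \in A); rewrite ?andbF //= (disjointFr dAB yA) ?andbF.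
have xe : x != e by apply: contraNneq eA => <-.
have eB' : e \notin x |: B by rewrite in_setU1 negb_or eq_sym xe eB.
have HA : A = x |: A' by rewrite setD1K.
have Hs := patt_split A' B xe.
rewrite -HA in Hs.
have H1 := IH A' B e cA' eA' eB dAB'.
have H2 := IH A' (x |: B) e cA' eA' eB' dAB''.
rewrite cardsU1 xB add1n addnS in H2.
rewrite Hs in H1.
move: H1 H2; set P := #|patt A B e|; set P2 := #|patt A' _ e|; set b := #|B|.
move=> H1 H2.
rewrite addSn !factS.
rewrite !factS in H1 H2.
set F := (k + b)`! in H1 H2 *.
set U := N`! * k`! * b`!.
have H1' : (P + P2) * ((k + b).+2 * ((k + b).+1 * F)) = U * (k + b).+2.
  by rewrite mulnCA H1 -/U mulnC.
have H2' : P2 * ((k + b).+2 * ((k + b).+1 * F)) = U * b.+1.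
  by rewrite H2 /U; ring.
rewrite mulnDl H2' in H1'.
have -> : N`! * (k.+1 * k`!) * b`! = U * k.+1 by rewrite /U; ring.
apply/eqP; rewrite -(eqn_add2r (U * b.+1)) H1' -mulnDr; apply/eqP; congr (_ * _); lia.
Qed.

Section PM.
Context (T : finType).

Definition pmW r (W : {set T}) := [set M : {set {set T}} |
  [forall e in M, (#|e| == r) && (e \subset W)] &&
  [forall v in W, #|[set e in M | v \in e]| == 1]].

Lemma blk_uniq (M : {set {set T}}) v f g : #|[set e in M | v \in e]| == 1 ->
  f \in M -> g \in M -> v \in f -> v \in g -> f = g.
Proof.
case/cards1P => a Ha fM gM vf vg.
have : f \in [set e in M | v \in e] by rewrite inE fM vf.
have : g \in [set e in M | v \in e] by rewrite inE gM vg.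
by rewrite Ha !inE => /eqP -> /eqP ->.
Qed.

Lemma pmW0 r : 0 < r -> pmW r set0 = [set set0].
Proof.
move=> r0; apply/setP => M; rewrite !inE; apply/idP/idP.
  move=> /andP[/forallP H _]; apply/eqP/setP => e; rewrite inE.
  apply/negbTE/negP => eM; move: (H e); rewrite eM /= => /andP[/eqP ce].
  rewrite subset0 => /eqP e0; move: ce; rewrite e0 cards0 => r0'.
  by rewrite -r0' in r0.
move/eqP => ->; apply/andP; split; apply/forallP => y; rewrite inE //.
Qed.

Lemma pmW_fix r (W : {set T}) (M : {set {set T}}) (e : {set T}) : e \in M -> M \in pmW r W ->
  M :\ e \in pmW r (W :\: e).
Proof.
move=> eM; rewrite !inE => /andP[/forallP H1 /forallP H2].
apply/andP; split; apply/forallP => f; apply/implyP.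
  rewrite !inE => /andP[fe fM].
  move: (H1 f); rewrite fM /= => /andP[-> fW] /=.
  apply/subsetP => v vf; rewrite inE (subsetP fW v vf) andbT.
  apply/negP => ve.
  have vW := subsetP fW v vf.
  have := blk_uniq (implyP (H2 v) vW) fM eM vf ve.
  by move=> E; rewrite E eqxx in fe.
rewrite inE => /andP[fe fW].
have := implyP (H2 f) fW.
suff -> : [set e0 in M :\ e | f \in e0] = [set e0 in M | f \in e0] by [].
apply/setP => g; rewrite !inE.
case: (eqVneq g e) => [->|] /=; last by [].
by rewrite (negbTE fe) andbF.
Qed.

Lemma pmW_add r (W : {set T}) (M : {set {set T}}) (e : {set T}) : #|e| = r -> e \subset W ->
  M \in pmW r (W :\: e) -> e |: M \in pmW r W.
Proof.
move=> ce eW; rewrite !inE => /andP[/forallP H1 /forallP H2].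
apply/andP; split; apply/forallP => f; apply/implyP.
  rewrite in_setU1 => /orP[/eqP->|fM]; first by rewrite ce eqxx eW.
  move: (H1 f); rewrite fM /= => /andP[-> fW] /=.
  by apply: subset_trans fW (subsetDl _ _).
move=> fW.
case: (boolP (f \in e)) => fe.
  apply/cards1P; exists e; apply/setP => g; rewrite !inE.
  case: (eqVneq g e) => [->|ge] /=; first by rewrite fe.
  apply/negbTE/negP => /andP[gM fg].
  move: (H1 g); rewrite gM /= => /andP[_ /subsetP/(_ f fg)].
  by rewrite inE fe.
have fWe : f \in W :\: e by rewrite inE fe fW.
have := implyP (H2 f) fWe.
suff -> : [set e0 in e |: M | f \in e0] = [set e0 in M | f \in e0] by [].
apply/setP => g; rewrite !inE.
case: (eqVneq g e) => [->|] /=; last by [].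
by rewrite (negbTE fe) andbF.
Qed.

Lemma pmW_fiber r (W e : {set T}) : 0 < r -> #|e| = r -> e \subset W ->
  #|[set M in pmW r W | e \in M]| = #|pmW r (W :\: e)|.
Proof.
move=> r0 ce eW.
have e0 : e != set0 by apply/eqP => e0; move: ce; rewrite e0 cards0 => r0'; rewrite -r0' in r0.
have eN : forall M, M \in pmW r (W :\: e) -> e \notin M.
  move=> M; rewrite inE => /andP[/forallP H _]; apply/negP => eM.
  move: (H e); rewrite eM /= => /andP[_ /subsetP sub].
  case/set0Pn: e0 => v ve; move: (sub v ve); by rewrite inE ve.
rewrite -(@card_in_imset _ _ (fun M => e |: M) (pmW r (W :\: e))).
  apply: eq_card => M; rewrite inE; apply/andP/imsetP.
    move=> [MP eM]; exists (M :\ e); first exact: pmW_fix.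
    by rewrite setD1K.
  move=> [M' M'P ->]; split; [exact: pmW_add | exact: setU11].
move=> M1 M2 H1 H2 E.
have := congr1 (fun X => X :\ e) E; rewrite /= !setU1K //; exact: eN.
Qed.

Lemma pm_count r (hr : 0 < r) k : forall W : {set T}, #|W| = r * k ->
  #|pmW r W| * (r`! ^ k * k`!) = (r * k)`!.
Proof.
elim: k => [|k IH] W cW.
  move: cW; rewrite muln0 => /cards0_eq ->; rewrite pmW0 // cards1 //.
have : 0 < #|W| by rewrite cW muln_gt0 hr.
case/card_gt0P => x xW.
set Ex := [set e : {set T} | (x \in e) && (e \subset W) && (#|e| == r)].
have H1 : #|pmW r W| = \sum_(e in Ex) #|[set M in pmW r W | e \in M]|.
  rewrite -sum1_card.
  transitivity (\sum_(M in pmW r W) \sum_(e in Ex) (e \in M : nat)).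
    apply: eq_bigr => M MP.
    have := MP; rewrite inE => /andP[/forallP HM1 /forallP HM2].
    have := implyP (HM2 x) xW.
    rewrite big_mkcond /=.
    rewrite (eq_bigr (fun e => ((e \in [set e0 in Ex | e0 \in M]) : nat))); last first.
      by move=> e _; rewrite inE; case: (e \in Ex).
    rewrite -big_mkcond /= sum1_card => /eqP <-.
    apply: eq_card => e; rewrite !inE.
    apply/andP/andP => [[eM xe]|[/andP[/andP[xe eW] ce] eM]]; split => //.
    by move: (HM1 e); rewrite eM /= => /andP[-> ->]; rewrite xe.
  rewrite exchange_big /=; apply: eq_bigr => e _.
  rewrite -sum1_card big_mkcond /= [in RHS]big_mkcond /=; apply: eq_bigr => M _.
  by rewrite [M \in [set _ in _ | _]]inE; case: (M \in pmW r W); case: (e \in M).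
have H2 : forall e, e \in Ex -> #|[set M in pmW r W | e \in M]| * (r`! ^ k * k`!) = (r * k)`!.
  move=> e; rewrite inE => /andP[/andP[xe eW] /eqP ce].
  rewrite pmW_fiber //; apply: IH.
  rewrite cardsD (setIidPr eW) ce cW mulnS; lia.
have H3 : #|Ex| = 'C(#|W :\ x|, r.-1).
  rewrite -cards_draws.
  rewrite -(@card_in_imset _ _ (fun e => e :\ x) Ex).
    apply: eq_card => A; rewrite inE; apply/imsetP/andP.
      move=> [e]; rewrite inE => /andP[/andP[xe eW] /eqP ce] ->; split.
        by apply: setSD.
      by rewrite -ce (cardsD1 x e) xe add1n.
    move=> [AW /eqP cA].
    have xA : x \notin A by apply/negP => /(subsetP AW); rewrite !inE eqxx.
    exists (x |: A); last by rewrite setU1K.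
    rewrite inE setU11 /= cardsU1 xA cA.
    have -> : (x |: A \subset W).
      by rewrite subUset sub1set xW /=; apply: subset_trans AW (subsetDl _ _).
    by rewrite /= add1n prednK.
  move=> e1 e2; rewrite !inE => /andP[/andP[x1 _] _] /andP[/andP[x2 _] _] E.
  by rewrite -(setD1K x1) -(setD1K x2) E.
have H4 : #|pmW r W| * (r`! ^ k * k`!) = #|Ex| * (r * k)`!.
  by rewrite H1 big_distrl /= (eq_bigr _ H2) sum_nat_const.
have cWx : #|W :\ x| = r * k + r.-1.
  move: cW; rewrite (cardsD1 x W) xW mulnS add1n => cW.
  have := prednK hr; lia.
have Er : r = r.-1.+1 by rewrite prednK.
rewrite H3 cWx in H4.
move: H4; set r' := r.-1; set P := #|pmW r W| => H4.
rewrite expnS factS.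
have -> : P * (r`! * r`! ^ k * (k.+1 * k`!)) = (P * (r`! ^ k * k`!)) * (r`! * k.+1) by ring.
rewrite H4.
have Hb := bin_fact (leq_addl (r*k) r').
rewrite addnK in Hb.
have -> : r * k.+1 = (r * k + r').+1 by rewrite mulnS {1}Er addSn addnC.
have Hr : r`! = r * r'`! by rewrite /r' -{1}(prednK hr) factS prednK.
rewrite factS -Hb Hr.
have -> : (r * k + r').+1 = r * k.+1 by rewrite /r'; nia.
ring.
Qed.
End PM.
Section Alg.
Local Open Scope ring_scope.

Lemma prod_ind (T : finType) (R : comRingType) (S : {set T}) (b : T -> bool) :
  \prod_(w in S) ((b w)%:R : R) = ([forall w in S, b w])%:R.
Proof.
case: (boolP [forall w in S, b w]) => [/forallP H|/forallPn[w0]].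
  by apply: big1 => w wS; move: (H w); rewrite wS /= => ->.
rewrite negb_imply => /andP[w0S /negbTE bw0].
by rewrite (bigD1 w0) //= bw0 mul0r.
Qed.

Lemma expand (T : finType) (R : comRingType) k : forall (A : {set T}) (f : T -> R),
  #|A| = k ->
  \prod_(w in A) (1 - f w) = \sum_(S in powerset A) (-1) ^+ #|S| * \prod_(w in S) f w.
Proof.
elim: k => [|k IH] A f cA.
  move/cards0_eq: cA => ->; rewrite powerset0 big_set1 big_set0 cards0 big_set0.
  by rewrite expr0 mulr1.
have : (0 < #|A|)%N by rewrite cA.
case/card_gt0P => x xA.
set A' := A :\ x.
have cA' : #|A'| = k by move: cA; rewrite (cardsD1 x A) xA add1n => -[].
rewrite (bigD1 x) //= (eq_bigl (fun w => w \in A')); last by move=> w; rewrite !inE andbC.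
rewrite (IH A' f cA').
rewrite [RHS](bigID (fun S : {set T} => x \in S)) /= addrC.
rewrite mulrBl mul1r.
congr (_ + _).
  apply: eq_big => [S|S _]; last by [].
  rewrite !powersetE; apply/idP/andP => [SA'|[SA xS]].
    split; first by apply: subset_trans SA' (subsetDl _ _).
    by apply/negP => /(subsetP SA'); rewrite !inE eqxx.
  apply/subsetP => y yS; rewrite !inE (subsetP SA y yS) andbT.
  by apply/negP => /eqP yx; move: xS; rewrite -yx yS.
rewrite [RHS](reindex_onto (fun S' => x |: S') (fun S => S :\ x)) /=; last first.
  by move=> S /andP[_ xS]; rewrite setD1K.
rewrite big_distrr -sumrN /=.
apply: eq_big => [S|S].
  rewrite !powersetE setU11 andbT.
  apply/idP/andP => [SA'|[SA /eqP SE]]; last by rewrite -SE; exact: setSD SA.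
  have xS : x \notin S by apply/negP => /(subsetP SA'); rewrite !inE eqxx.
  split; last by rewrite setU1K.
  rewrite subUset sub1set xA /=; apply: subset_trans SA' (subsetDl _ _).
rewrite powersetE => SA'.
have xS : x \notin S by apply/negP => /(subsetP SA'); rewrite !inE eqxx.
rewrite cardsU1 xS add1n exprS big_setU1 //=.
ring.
Qed.

Lemma group_size (T : finType) (R : comRingType) (A : {set T}) k (g : nat -> R) :
  #|A| = k ->
  \sum_(S in powerset A) g #|S| = \sum_(i < k.+1) ('C(k, i))%:R * g i.
Proof.
move=> cA.
rewrite (partition_big (fun S : {set T} => (inord #|S| : 'I_k.+1)) xpredT) //=.
apply: eq_bigr => i _.
have -> : \sum_(S in powerset A | inord #|S| == i) g #|S| =
          \sum_(S in [set S : {set T} | S \subset A & #|S| == i]) g i.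
  apply: eq_big => [S|S].
    rewrite powersetE inE; case SA: (S \subset A) => //=.
    have cS : (#|S| < k.+1)%N by rewrite ltnS -cA subset_leq_card.
    apply/eqP/eqP => [<-|E]; first by rewrite inordK.
    by apply: val_inj; rewrite /= inordK.
  rewrite powersetE => /andP[SA /eqP <-].
  have cS : (#|S| < k.+1)%N by rewrite ltnS -cA subset_leq_card.
  by rewrite inordK.
by rewrite sumr_const cards_draws cA mulr_natl.
Qed.

End Alg.

Section Main.
Context (r n : nat) (hr : 1 < r) (hn : 0 < n).
Context (x0 : {set 'I_(r * n)}) (hx0 : x0 \in all_edges r n).

Local Notation E := (all_edges r n).
Local Notation N := (nedges r n).
Local Notation Vt := 'I_(r * n).
Local Notation Ed := {set 'I_(r * n)}.
Local Notation Pm := {perm 'I_(nedges r n)}.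

Definition idx (x : {set 'I_(r * n)}) : 'I_N := enum_rank_in hx0 x.
Definition pos (s : {perm 'I_N}) x : 'I_N := (s^-1)%g (idx x).

Lemma idx_inj : {in E &, injective idx}.
Proof. by move=> x y xE yE; apply: enum_rank_in_inj. Qed.

Lemma pos_inj s : {in E &, injective (pos s)}.
Proof. by move=> x y xE yE /perm_inj; apply: idx_inj. Qed.

Lemma pos_injn s x y : x \in E -> y \in E -> (pos s x == pos s y :> nat) = (x == y).
Proof.
move=> xE yE; apply/eqP/eqP => [/val_inj|->//]; exact: pos_inj.
Qed.

Lemma prefixE s t : prefix_edges s t = [set x in E | pos s x < t].
Proof.
apply/setP => x; rewrite inE; apply/imsetP/andP.
  move=> [k]; rewrite inE => kt ->; split; first exact: enum_valP.
  by rewrite /pos /idx /kth_edge enum_valK_in permK.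
move=> [xE pt]; exists (pos s x); first by rewrite inE.
by rewrite /kth_edge /pos permKV /idx enum_rankK_in.
Qed.

Lemma prefixN s : prefix_edges s N = E.
Proof.
rewrite prefixE; apply/setP => x; rewrite inE; case: (x \in E) => //=.
exact: ltn_ord.
Qed.

Lemma coversE : @covers r n E.
Proof.
apply/forallP => v.
have : 0 < #|[set A : {set 'I_(r * n)} | A \subset [set~ v] & #|A| == r.-1]|.
  rewrite cards_draws bin_gt0 cardsC1 card_ord.
  have : r <= r * n by rewrite leq_pmulr.
  lia.
case/card_gt0P => A; rewrite inE => /andP[AV cA].
apply/existsP; exists (v |: A); rewrite setU11 andbT inE.
have vA : v \notin A by apply/negP => /(subsetP AV); rewrite !inE eqxx.
rewrite cardsU1 vA (eqP cA); lia.
Qed.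

Lemma stopP1 s : @covers r n (prefix_edges s (stop_time s)).
Proof.
have Hh : has (fun t => @covers r n (prefix_edges s t)) (iota 0 N.+1).
  apply/hasP; exists N; first by rewrite mem_iota add0n ltnSn.
  by rewrite prefixN coversE.
have := nth_find 0 Hh; rewrite nth_iota // -[X in _ < X](size_iota 0 N.+1) -has_find //.
Qed.

Lemma stopP2 s t : t < stop_time s -> ~~ @covers r n (prefix_edges s t).
Proof.
move=> lt; have := before_find 0 lt.
rewrite nth_iota ?add0n => [->//|].
apply: leq_trans lt _; rewrite /stop_time -[X in _ <= X](size_iota 0 N.+1).
exact: find_size.
Qed.

Definition Xv (M : {set {set 'I_(r * n)}}) (s : {perm 'I_N}) (v : 'I_(r * n)) :=
  [forall x in E, (v \in x) ==> [forall y in M, pos s y <= pos s x]].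

Lemma subG (s : {perm 'I_N}) (M : {set {set 'I_(r * n)}}) : M \subset E -> M != set0 ->
  (M \subset G_omega s) = [exists v, Xv M s v].
Proof.
move=> ME M0; rewrite /G_omega prefixE.
apply/idP/idP.
  move=> sub.
  have cM : 0 < #|M| by rewrite card_gt0.
  case: (eq_bigmax_cond (fun y => nat_of_ord (pos s y)) cM) => ys ysM HL.
  have Lt : pos s ys < stop_time s.
    by move/subsetP: sub => /(_ ys ysM); rewrite inE => /andP[].
  have := stopP2 Lt; rewrite negb_forall => /existsP[v Hv].
  apply/existsP; exists v; apply/forallP => x; apply/implyP => xE; apply/implyP => vx.
  apply/forallP => y; apply/implyP => yM.
  apply: (@leq_trans (\max_(y in M) pos s y)); first exact: leq_bigmax_cond.
  rewrite HL leqNgt; apply/negP => Hx.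
  move/negP: Hv; apply.
  by apply/existsP; exists x; rewrite prefixE inE xE Hx vx.
move=> /existsP[v /forallP Hv]; apply/subsetP => y yM.
rewrite inE (subsetP ME y yM) /=.
have := stopP1 s; move/forallP => /(_ v) /existsP[x /andP[]].
rewrite prefixE inE => /andP[xE xt] vx.
move: (Hv x); rewrite xE vx /= => /forallP /(_ y); rewrite yM /= => Hyx.
exact: leq_ltn_trans Hyx xt.
Qed.


Lemma cardM (M : {set {set 'I_(r * n)}}) : M \subset E -> is_matching M -> #|M| = n.
Proof.
move=> ME /forallP Mm.
have H : \sum_(y in M) #|y| = r * n.
  transitivity (\sum_(y in M) \sum_(v : 'I_(r * n)) (v \in y)).
    by apply: eq_bigr => y _; rewrite -sum1_card big_mkcond.
  rewrite exchange_big /= -[r * n in RHS]card_ord -sum1_card; apply: eq_bigr => v _.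
  move: (Mm v) => /eqP <-; rewrite -sum1_card [RHS]big_mkcond /= big_mkcond /=.
  by apply: eq_bigr => y _; rewrite inE; case: (y \in M); case: (v \in y).
have H2 : \sum_(y in M) #|y| = #|M| * r.
  rewrite -sum_nat_const; apply: eq_bigr => y yM.
  by move/subsetP: ME => /(_ y yM); rewrite inE => /eqP.
apply/eqP; rewrite -(eqn_pmul2l (ltnW hr)) mulnC -H2 H.
done.
Qed.

Lemma Xv_max (s : Pm) (M : {set Ed}) (v : Vt) (e : Ed) : M \subset E -> v \in e -> e \in M -> Xv M s v ->
  forall y, y \in M -> pos s y <= pos s e.
Proof.
move=> ME ve eM /forallP /(_ e); rewrite (subsetP ME e eM) ve /= => /forallP H y yM.
by move: (H y); rewrite yM.
Qed.

Lemma ind_exists (s : Pm) (M : {set Ed}) : M \subset E -> is_matching M ->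
  (([exists v, Xv M s v]%:R : rat) = \sum_(e in M) ([exists w in e, Xv M s w]%:R : rat))%R.
Proof.
move=> ME Mm.
case: (boolP [exists v, Xv M s v]) => [/existsP[v Hv]|Hn].
  have := forallP Mm v; move=> Hc; have Hc' := Hc; move/cards1P: Hc' => [a Ha].
  have : a \in [set e in M | v \in e] by rewrite Ha set11.
  rewrite inE => /andP[aM va].
  rewrite (bigD1 a) //= big1 ?addr0.
    by have -> : [exists w in a, Xv M s w] by apply/existsP; exists v; rewrite va.
  move=> e /andP[eM ea].
  case: (boolP [exists w in e, Xv M s w]) => // /existsP[w /andP[we Hw]].
  have H1 := Xv_max ME we eM Hw aM.
  have H2 := Xv_max ME va aM Hv eM.
  have : pos s a == pos s e :> nat by rewrite eqn_leq H1 H2.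
  rewrite pos_injn ?(subsetP ME) // => /eqP ae.
  by rewrite ae eqxx in ea.
rewrite big1 // => e eM.
case: (boolP [exists w in e, Xv M s w]) => // /existsP[w /andP[we Hw]].
by move: Hn; rewrite negb_exists => /forallP /(_ w); rewrite Hw.
Qed.

Lemma forall_imset (T1 T2 : finType) (f : T1 -> T2) (X : {set T1}) (P : pred T2) :
  [forall a in f @: X, P a] = [forall y in X, P (f y)].
Proof.
apply/forallP/forallP => H.
  by move=> y; apply/implyP => yX; move: (H (f y)); rewrite imset_f.
move=> a; apply/implyP => /imsetP[y yX ->]; by move: (H y); rewrite yX.
Qed.

Definition DS (S : Ed) := E :\: [set x : Ed | x \subset ~: S].

Lemma Zchar (s : Pm) (M : {set Ed}) (e S : Ed) : M \subset E -> is_matching M -> e \in M -> S \subset e -> S != set0 ->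
  [forall w in S, Xv M s w] =
  [forall y in M :\ e, pos s y < pos s e] && [forall x in DS S :\ e, pos s e < pos s x].
Proof.
move=> ME Mm eM Se S0.
have eE := subsetP ME e eM.
apply/idP/idP.
  move=> /forallP H.
  case/set0Pn: S0 => w0 w0S.
  have Hw0 : Xv M s w0 by move: (H w0); rewrite w0S.
  have Hmax := Xv_max ME (subsetP Se w0 w0S) eM Hw0.
  apply/andP; split; apply/forallP => y; apply/implyP; rewrite !inE => /andP[ye yM].
    rewrite ltn_neqAle Hmax // andbT pos_injn ?(subsetP ME) //.
  move: yM => /andP[/negP yS yE0].
  have yE : y \in E by rewrite inE.
  have [w wy wS] : exists2 w, w \in y & w \in S.
    case: (boolP [exists w in y, w \in S]) => [/existsP[w /andP[??]]|Hn]; first by exists w.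
    exfalso; apply: yS; apply/subsetP => w wy; rewrite inE.
    by apply/negP => wS; move: Hn; rewrite negb_exists => /forallP /(_ w); rewrite wy wS.
  have Hw : Xv M s w by move: (H w); rewrite wS.
  move/forallP: Hw => /(_ y); rewrite yE wy /= => /forallP /(_ e); rewrite eM /= => le.
  by rewrite ltn_neqAle le andbT pos_injn // eq_sym.
move=> /andP[/forallP H1 /forallP H2].
apply/forallP => w; apply/implyP => wS.
apply/forallP => x; apply/implyP => xE; apply/implyP => wx.
apply/forallP => y; apply/implyP => yM.
have le1 : pos s y <= pos s e.
  have [->//|ye] := eqVneq y e.
  by move: (H1 y); rewrite !inE ye yM /= => /ltnW.
apply: leq_trans le1 _.
have [->//|xe] := eqVneq x e.
have xD : x \in DS S :\ e.
  rewrite in_setD1 xe /= /DS in_setD xE andbT inE; apply/negP => /subsetP /(_ w wx); by rewrite inE wS.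
by move: (H2 x); rewrite xD /= => /ltnW.
Qed.


Definition Kc i := 'C(r * n, r) - 'C(r * n - i, r).

Lemma cardE : #|E| = 'C(r * n, r).
Proof. by rewrite /all_edges card_draws card_ord. Qed.

Lemma cardDS (S : Ed) : #|DS S| = Kc #|S|.
Proof.
rewrite /DS cardsD cardE /Kc.
have -> : E :&: [set x : Ed | x \subset ~: S] = [set x : Ed | x \subset ~: S & #|x| == r].
  by apply/setP => x; rewrite !inE andbC.
rewrite cards_draws.
have := cardsC S; rewrite card_ord => H.
by have -> : #|~: S| = r * n - #|S| by lia.
Qed.

Lemma Zcount (M : {set Ed}) (e S : Ed) : M \subset E -> is_matching M -> e \in M ->
  S \subset e -> S != set0 ->
  #|[set s : Pm | [forall w in S, Xv M s w]]| * ((n.-1 + (Kc #|S|).-1).+1)`! =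
  N`! * (n.-1)`! * (Kc #|S|).-1`!.
Proof.
move=> ME Mm eM Se S0.
have eE := subsetP ME e eM.
set A := idx @: (M :\ e).
set B := idx @: (DS S :\ e).
have eD : e \in DS S.
  rewrite /DS in_setD eE andbT inE; case/set0Pn: S0 => w wS.
  by apply/negP => /subsetP /(_ w (subsetP Se w wS)); rewrite inE wS.
have subE1 : M :\ e \subset E by apply: subset_trans (subsetDl _ _) ME.
have subE2 : DS S :\ e \subset E by apply: subset_trans (subsetDl _ _) (subsetDl _ _).
have cA : #|A| = n.-1.
  rewrite card_in_imset; last by move=> x y /(subsetP subE1) xE /(subsetP subE1) yE; apply: idx_inj.
  have cM := cardM ME Mm; have := cardsD1 e M; rewrite eM cM /= => H.
  by apply/eqP; rewrite -eqSS prednK // -add1n -H.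
have cB : #|B| = (Kc #|S|).-1.
  rewrite card_in_imset; last by move=> x y /(subsetP subE2) xE /(subsetP subE2) yE; apply: idx_inj.
  have := cardsD1 e (DS S); rewrite eD cardDS /= => H; by rewrite H add1n.
have eA : idx e \notin A.
  apply/negP => /imsetP[y yM /esym E1].
  have := idx_inj (subsetP subE1 y yM) eE E1 => ye.
  by move: yM; rewrite ye !inE eqxx.
have eB : idx e \notin B.
  apply/negP => /imsetP[y yM /esym E1].
  have := idx_inj (subsetP subE2 y yM) eE E1 => ye.
  by move: yM; rewrite ye !inE eqxx.
have dAB : [disjoint A & B].
  apply/pred0P => z /=; apply/negbTE/negP => /andP[/imsetP[y yM ->] /imsetP[x xD E1]].
  have := idx_inj (subsetP subE1 y yM) (subsetP subE2 x xD) E1 => yx.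
  subst x.
  move: yM xD; rewrite !in_setD1 => /andP[ye yM] /andP[_].
  rewrite /DS in_setD inE => /andP[/negP yS _].
  apply: yS; apply/subsetP => w wy; rewrite inE; apply/negP => wS.
  have := blk_uniq (forallP Mm w) yM eM wy (subsetP Se w wS) => E2.
  by rewrite E2 eqxx in ye.
have Hc := patt_count (N := N) cA eA eB dAB.
rewrite cB in Hc; rewrite -Hc; congr (_ * _).
rewrite -(card_imset (patt A B (idx e)) (@invg_inj _)).
apply: eq_card => s; rewrite inE (Zchar s ME Mm eM Se S0).
rewrite /patt; apply/idP/imsetP.
  move=> H; exists (s^-1)%g; last by rewrite invgK.
  by rewrite inE !forall_imset.
move=> [q qP ->]; move: qP; rewrite inE !forall_imset.
by rewrite /pos !invgK.
Qed.


Local Open Scope ring_scope.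

Definition cnt i : rat :=
  (N`! * (n.-1)`! * (Kc i).-1`!)%N%:R / (((n.-1 + (Kc i).-1).+1)`!)%N%:R.

Definition hZ i : rat := if i == 0%N then (N`!)%:R else cnt i.

Lemma Zcount_rat (M : {set Ed}) (e S : Ed) : M \subset E -> is_matching M -> e \in M ->
  S \subset e ->
  (#|[set s : Pm | [forall w in S, Xv M s w]]|)%:R = hZ #|S|.
Proof.
move=> ME Mm eM Se.
have [->|S0] := eqVneq S set0.
  rewrite cards0 /hZ /=.
  have -> : [set s : Pm | [forall w in set0, Xv M s w]] = setT.
    by apply/setP => s; rewrite !inE; apply/forallP => w; rewrite inE.
  by rewrite cardsT card_Sn.
have Hc := Zcount ME Mm eM Se S0.
rewrite /hZ /cnt.
have -> : (#|S| == 0%N) = false by apply/negbTE; rewrite cards_eq0.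
rewrite -Hc natrM mulfK //.
by rewrite pnatr_eq0 -lt0n fact_gt0.
Qed.

Lemma cardE_sum (P : pred Pm) : (#|[set s : Pm | P s]|)%:R = \sum_(s : Pm) ((P s)%:R : rat).
Proof.
rewrite -sum1_card natr_sum big_mkcond /=.
by apply: eq_bigr => s _; rewrite inE; case: (P s).
Qed.

Lemma ecount (M : {set Ed}) (e : Ed) : M \subset E -> is_matching M -> e \in M ->
  \sum_(s : Pm) ([exists w in e, Xv M s w])%:R =
  \sum_(1 <= i < r.+1) (-1) ^+ (i - 1) * ('C(r, i))%:R * cnt i.
Proof.
move=> ME Mm eM.
have ce : #|e| = r by move: (subsetP ME e eM); rewrite inE => /eqP.
have step1 : forall s : Pm, ([exists w in e, Xv M s w])%:R =
    1 - \sum_(S in powerset e) (-1) ^+ #|S| * \prod_(w in S) ((Xv M s w)%:R : rat) :> rat.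
  move=> s.
  rewrite -(expand _ ce).
  rewrite (eq_bigr (fun w => ((~~ Xv M s w)%:R : rat))); last by move=> w _; case: (Xv M s w); rewrite ?subrr ?subr0.
  rewrite prod_ind.
  case: (boolP [exists w in e, Xv M s w]) => [/existsP[w /andP[we Xw]]|Hn].
    have -> : [forall w in e, ~~ Xv M s w] = false.
      by apply/negbTE/negP => /forallP /(_ w); rewrite we Xw.
    by rewrite subr0.
  have -> : [forall w in e, ~~ Xv M s w].
    by apply/forallP => w; apply/implyP => we; apply/negP => Xw; move: Hn; rewrite negb_exists => /forallP /(_ w); rewrite we Xw.
  by rewrite subrr.
rewrite (eq_bigr _ (fun s _ => step1 s)) sumrB sumr_const card_Sn.
rewrite exchange_big /=.
have -> : \sum_(S in powerset e) \sum_(s : Pm) (-1) ^+ #|S| * \prod_(w in S) ((Xv M s w)%:R : rat)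
   = \sum_(S in powerset e) (-1) ^+ #|S| * hZ #|S|.
  apply: eq_bigr => S; rewrite powersetE => Se.
  under eq_bigr => s _ do rewrite prod_ind.
  rewrite -mulr_sumr -(Zcount_rat ME Mm eM Se); congr (_ * _).
  rewrite cardE_sum.
  by [].
rewrite (group_size (fun i => (-1) ^+ i * hZ i) ce).
rewrite big_ord_recl /= bin0 expr0 mul1r mul1r /hZ eqxx.
rewrite -(big_mkord xpredT (fun i => ('C(r, i.+1))%:R * ((-1) ^+ i.+1 * hZ i.+1))).
rewrite big_add1 /= opprD addrA subrr add0r -sumrN.
apply: eq_bigr => i _.
by rewrite /hZ /= subn1 /= exprS; ring.
Qed.


Lemma Mcount (M : {set Ed}) : M \subset E -> is_matching M ->
  \sum_(s : Pm) ((M \subset G_omega s)%:R : rat) =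
  n%:R * \sum_(1 <= i < r.+1) (-1) ^+ (i - 1) * ('C(r, i))%:R * cnt i.
Proof.
move=> ME Mm.
have cM := cardM ME Mm.
have M0 : M != set0 by rewrite -card_gt0 cM.
under eq_bigr => s _ do rewrite (subG s ME M0) (ind_exists s ME Mm).
rewrite exchange_big /=.
rewrite (eq_bigr _ (fun e eM => ecount ME Mm eM)) sumr_const cM.
by rewrite mulr_natl.
Qed.

Lemma Kc_gt0 i : (0 < i)%N -> (0 < Kc i)%N.
Proof.
move=> i0; rewrite /Kc subn_gt0.
have rn : (r <= r * n)%N by rewrite leq_pmulr.
have H1 : ('C(r * n - i, r) <= 'C((r * n).-1, r))%N by apply: leq_bin2l; lia.
have H2 := binS (r * n).-1 r.-1.
rewrite !prednK in H2; try lia.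
have H3 : (0 < 'C((r * n).-1, r.-1))%N by rewrite bin_gt0; lia.
lia.
Qed.

Lemma cnt_eq i : (0 < i)%N ->
  n%:R * cnt i / (N`!)%:R = 1 / ('C('C(n * r, r) - 'C(n * r - i, r) + n - 1, n))%:R.
Proof.
move=> i0.
have K0 := Kc_gt0 i0.
rewrite /cnt (mulnC n r).
set K := Kc i.
have -> : ('C(r * n, r) - 'C(r * n - i, r) + n - 1)%N = (K + n - 1)%N by [].
have Hb := @bin_fact (K + n - 1) n ltac:(lia).
have E1 : (K + n - 1 - n = K.-1)%N by lia.
have E2 : ((n.-1 + K.-1).+1 = K + n - 1)%N by lia.
rewrite E1 in Hb; rewrite E2.
rewrite -Hb.
have Fn : n`! = (n * (n.-1)`!)%N by rewrite -{1}(prednK hn) factS prednK.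
rewrite Fn !natrM.
have nz1 : (N`!)%:R != 0 :> rat by rewrite pnatr_eq0 -lt0n fact_gt0.
have nz2 : ((n.-1)`!)%:R != 0 :> rat by rewrite pnatr_eq0 -lt0n fact_gt0.
have nz3 : ((K.-1)`!)%:R != 0 :> rat by rewrite pnatr_eq0 -lt0n fact_gt0.
have nz4 : ('C(K + n - 1, n))%:R != 0 :> rat by rewrite pnatr_eq0 -lt0n bin_gt0; lia.
have nz5 : n%:R != 0 :> rat by rewrite pnatr_eq0 -lt0n.
field.
by rewrite nz1 nz2 nz3 nz4 nz5.
Qed.


Lemma G_sub s : G_omega s \subset E.
Proof. by rewrite /G_omega prefixE; apply/subsetP => x; rewrite inE => /andP[]. Qed.

Definition PMs := [set M : {set Ed} | (M \subset E) && is_matching M].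

Lemma cardPMs : (#|PMs|)%:R = ((r * n)`!)%:R / (((r`!) ^ n * n`!)%N)%:R :> rat.
Proof.
have Hp := @pm_count _ r (ltnW hr) n [set: Vt] ltac:(by rewrite cardsT card_ord).
have -> : PMs = pmW r [set: Vt].
  apply/setP => M; rewrite !inE; congr (_ && _).
    apply/subsetP/forallP => [H e|H e eM].
      by apply/implyP => eM; rewrite subsetT andbT; move: (H e eM); rewrite inE.
    by move: (H e); rewrite eM /= subsetT andbT inE.
  by apply/forallP/forallP => H v; move: (H v); rewrite inE.
rewrite -Hp natrM mulfK //.
by rewrite pnatr_eq0 -lt0n muln_gt0 expn_gt0 !fact_gt0.
Qed.

Lemma final_sec : expected_matchings r n =
  ((r * n)`!)%:R / (((r`!) ^ n * n`!)%N)%:R *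
  \sum_(1 <= i < r.+1)
     (-1) ^+ (i - 1) * ('C(r, i))%:R /
     ('C('C(n * r, r) - 'C(n * r - i, r) + n - 1, n))%:R :> rat.
Proof.
rewrite /expected_matchings.
have H1 : forall s : Pm, ((num_matchings (G_omega s))%:R : rat) =
    \sum_(M in PMs) ((M \subset G_omega s)%:R : rat).
  move=> s; rewrite /num_matchings -sum1_card natr_sum big_mkcond /= [RHS]big_mkcond /=.
  apply: eq_bigr => M _; rewrite !inE.
  case: (boolP (M \subset G_omega s)) => MG /=; last by case: (_ && _).
  by rewrite (subset_trans MG (G_sub s)) /=; case: (is_matching M).
rewrite (eq_bigr _ (fun s _ => H1 s)) exchange_big /=.
have H2 : forall M, M \in PMs -> \sum_(s : Pm) ((M \subset G_omega s)%:R : rat) =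
    n%:R * \sum_(1 <= i < r.+1) (-1) ^+ (i - 1) * ('C(r, i))%:R * cnt i.
  by move=> M; rewrite inE => /andP[ME Mm]; exact: Mcount ME Mm.
rewrite (eq_bigr _ H2).
rewrite sumr_const -(mulr_natl _ #|PMs|) -cardPMs -mulrA; congr (_ * _).
rewrite mulr_sumr big_distrl /= big_nat [RHS]big_nat; apply: eq_bigr => i /andP[i0 _].
have := cnt_eq i0.
set Cb := ('C(_, n))%:R => Hc.
have -> : (-1) ^+ (i - 1) * ('C(r, i))%:R / Cb = (-1) ^+ (i - 1) * ('C(r, i))%:R * (1 / Cb) by rewrite mul1r.
rewrite -Hc.
field.
by rewrite pnatr_eq0 -lt0n fact_gt0.
Qed.

End Main.


Local Open Scope ring_scope.

Theorem theorem3 (r n : nat) (hr : (2 <= r)%N) (hn : (1 <= n)%N) :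
  expected_matchings r n =
  ((r * n)`!)%:R / (((r`!) ^ n * n`!)%N)%:R *
  \sum_(1 <= i < r.+1)
     (-1) ^+ (i - 1) * ('C(r, i))%:R /
     ('C('C(n * r, r) - 'C(n * r - i, r) + n - 1, n))%:R :> rat.
Proof.
have : (0 < #|all_edges r n|)%N by rewrite (@cardE r n) bin_gt0 leq_pmulr.
case/card_gt0P => x0 hx0.
exact: (@final_sec r n hr hn x0 hx0).
Qed.
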